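(* Let $q=2^f\geq 4$ and let $I=\{0,\ f,\ 2f/\gcd(3,f),\ 4f/\gcd(3,f)\}$. Let $b\in\mathbb{F}_{q^2}^\times$ satisfy $b+b^q=1$ and $b^{q+1}\neq 1$. Then there exists an element $a\in\mathbb{F}_{q^2}^\times$ of order $q+1$ such that (1) $(1+b+b^2)^{2^i}\neq a+a^{-1}+1$ for every $i\in I$; (2) $(1+b+b^2)^{2^i}\neq a(1+b+b^3+b^4)+a^{-1}(b^2+b^3+b^4)$ for every $i\in I$; (3) $a+a^{-1}+1\neq a(1+b+b^3+b^4)+a^{-1}(b^2+b^3+b^4)$; (4) $a+a^{-1}+1\neq 0$. *)

(* Defs.v *)
From HB Require Import structures.
From mathcomp Require Import all_boot all_order all_algebra.
Set Implicit Arguments. Unset Strict Implicit. Unset Printing Implicit Defensive.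
Import GRing.Theory.
Local Open Scope ring_scope.

Definition index_set (f : nat) : seq nat :=
  [:: 0%N; f; (2 * f %/ gcdn 3 f)%N; (4 * f %/ gcdn 3 f)%N].

(* Main.v *)
Require Import Defs.
From HB Require Import structures.
From mathcomp Require Import all_boot all_order all_algebra.
From mathcomp Require Import all_fingroup all_solvable all_field.
From mathcomp Require Import zify ring lra.
Import GRing.Theory.
Local Open Scope ring_scope.

Lemma totient_sq (n : nat) : odd n -> (n <= totient n * totient n)%N.
Proof.
move=> on; have n0 : (0 < n)%N by case: n on.
rewrite totientE // {1}(prod_prime_decomp n0) prime_decompE big_map /=.
rewrite -big_split /= big_seq [X in (_ <= X)%N]big_seq.
apply: leq_prod => p; rewrite mem_primes => /and3P [pp _ pd].
have p3 : (3 <= p)%N.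
  have g1 := prime_gt1 pp; case: (even_prime pp) => [p2|op].
    by move: pd; rewrite p2 dvdn2 on.
  have gen : forall x, odd x -> (1 < x)%N -> (3 <= x)%N by case=> [|[|[|]]].
  exact: gen.
have : (0 < logn p n)%N by rewrite logn_gt0 mem_primes pp n0 pd.
case: (logn p n) => // k _ /=.
rewrite expnS.
have h1 : (p ^ k <= p ^ k * p ^ k)%N by rewrite leq_pmulr // expn_gt0 prime_gt0.
have h2 : (p <= p.-1 * p.-1)%N.
  have gen : forall x, (3 <= x)%N -> (x <= x.-1 * x.-1)%N by case=> [|x] //= ?; nia.
  exact: gen.
rewrite mulnACA; exact: leq_mul.
Qed.

Lemma frob2 {F : fieldType} (h2 : (2%:R : F) = 0) (x y : F) k :
  (x + y) ^+ (2 ^ k) = x ^+ (2 ^ k) + y ^+ (2 ^ k).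
Proof.
elim: k => [|k IH]; first by rewrite expn0 !expr1.
by rewrite expnSr !exprM IH sqrrD -mulr_natr h2 mulr0 addr0.
Qed.

Definition quad {F : fieldType} (x y z : F) : {poly F} := x *: 'X^2 + y *: 'X + z%:P.

Lemma quad_eval {F : fieldType} (x y z a : F) : (quad x y z).[a] = x * a ^+ 2 + y * a + z.
Proof. by rewrite /quad !hornerE. Qed.

Lemma quad_size {F : fieldType} (x y z : F) : (size (quad x y z) <= 3)%N.
Proof.
rewrite /quad; apply: (leq_trans (size_polyD _ _)); rewrite geq_max; apply/andP; split.
  apply: (leq_trans (size_polyD _ _)); rewrite geq_max; apply/andP; split.
    by apply: (leq_trans (size_scale_leq _ _)); rewrite size_polyXn.
  by apply: (leq_trans (size_scale_leq _ _)); rewrite size_polyX.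
by apply: (leq_trans (size_polyC_leq1 _)).
Qed.

Lemma quad_neq0 {F : fieldType} (x y z : F) : (z != 0) || (y != 0) -> quad x y z != 0.
Proof.
have c0 : (quad x y z)`_0 = z.
  by rewrite /quad !coefD !coefZ coefXn coefX coefC /= !mulr0 !add0r.
have c1 : (quad x y z)`_1 = y.
  by rewrite /quad !coefD !coefZ coefXn coefX coefC /= mulr0 mulr1 add0r addr0.
move=> /orP [] h; apply/eqP => e.
  by move: h; rewrite -c0 e coef0 eqxx.
by move: h; rewrite -c1 e coef0 eqxx.
Qed.

Lemma size_prod3 {F : fieldType} (I : Type) (s : seq I) (p : I -> {poly F}) :
  (forall i, size (p i) <= 3)%N -> (size (\prod_(i <- s) p i)%R <= (2 * size s).+1)%N.
Proof.
move=> hp; elim: s => [|i s IH]; first by rewrite big_nil size_poly1.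
rewrite big_cons; apply: (leq_trans (size_polyMleq _ _)).
have := hp i; move: IH; rewrite /=; lia.
Qed.


Lemma char2_eq {F : fieldType} {x y K : F} (h2 : (2%:R : F) = 0) :
  x - y = 2%:R * K -> x = y.
Proof. by rewrite h2 mul0r => /eqP; rewrite subr_eq0 => /eqP. Qed.

Lemma tot_bound f : (4 <= f)%N ->
  ((if 3 %| f then 19 else 7) <= totient (2 ^ f).+1)%N.
Proof.
move=> hf; have [f6|f7] := leqP f 6.
  by case: f hf f6 => [|[|[|[|[|[|[|f]]]]]]].
have ho : odd (2 ^ f).+1 by rewrite /= oddX orbF; case: f hf f7.
have hsq := totient_sq _ ho.
have h7 : (2 ^ 7 <= 2 ^ f)%N by rewrite leq_exp2l.
case: ifP => h3; last by move: hsq h7; set t := totient _; set m := (2 ^ f)%N; nia.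
have f9 : (9 <= f)%N.
  by move: h3 f7; case: f {hf ho hsq h7} => [|[|[|[|[|[|[|[|[|f]]]]]]]]].
have h9 : (2 ^ 9 <= 2 ^ f)%N by rewrite leq_exp2l.
by move: hsq h9; set t := totient _; set m := (2 ^ f)%N; nia.
Qed.


Definition concl (f : nat) {F : finFieldType} (b : F) : Prop :=
  exists a : F, a != 0 /\ (2 ^ f).+1.-primitive_root a /\ [/\
    (forall i, i \in index_set f -> (1 + b + b ^+ 2) ^+ (2 ^ i) != a + a^-1 + 1),
    (forall i, i \in index_set f -> (1 + b + b ^+ 2) ^+ (2 ^ i) !=
        a * (1 + b + b ^+ 3 + b ^+ 4) + a^-1 * (b ^+ 2 + b ^+ 3 + b ^+ 4)),
    a + a^-1 + 1 != a * (1 + b + b ^+ 3 + b ^+ 4) + a^-1 * (b ^+ 2 + b ^+ 3 + b ^+ 4)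
    & a + a^-1 + 1 != 0].

Lemma prim_exists (f : nat) (F : finFieldType) (hf : (1 <= f)%N) (hF : #|F| = ((2 ^ f) ^ 2)%N) :
  exists a0 : F, (2 ^ f).+1.-primitive_root a0.
Proof.
set q := (2 ^ f)%N.
have q1 : (2 ^ 1 <= q)%N by rewrite leq_exp2l.
rewrite expn1 in q1.
pose N := #|F|.-1.
have hN : N = ((q - 1) * q.+1)%N.
  have aux (m : nat) : (0 < m)%N -> (m * m).-1 = ((m - 1) * m.+1)%N.
    by case: m => // m _; rewrite /=; nia.
  rewrite /N hF -mulnn aux //; lia.
have N0 : (0 < N)%N by rewrite hN muln_gt0 /=; lia.
have : has N.-primitive_root (enum [pred x : F | x != 0]).
  apply: has_prim_root => //.
  - apply/allP => x; rewrite mem_enum inE => x0.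
    rewrite unity_rootE; apply/eqP; apply: (mulIf x0).
    by rewrite mul1r -exprSr /N prednK ?expf_card // hF !expn_gt0.
  - exact: enum_uniq.
  - by rewrite -cardE /N -(cardC1 (0 : F)).
case/hasP => g _ pg.
exists (g ^+ (q - 1)).
have := exp_prim_root pg (q - 1).
have -> : gcdn (q - 1) N = (q - 1)%N by apply/gcdn_idPl; rewrite hN dvdn_mulr.
by rewrite hN mulKn //; lia.
Qed.


Lemma general (f : nat) (F : finFieldType) (hf : (4 <= f)%N)
  (hF : #|F| = ((2 ^ f) ^ 2)%N) (b : F) (hb0 : b != 0)
  (hc0 : 1 + b + b ^+ 2 != 0)
  (hckf : forall k, (1 + b + b ^+ 2) ^+ (2 ^ (k * f)) = 1 + b + b ^+ 2) :
  concl f b.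
Proof.
rewrite /concl.
set c := 1 + b + b ^+ 2 in hc0 hckf *.
set X := 1 + b + b ^+ 3 + b ^+ 4.
set Y := b ^+ 2 + b ^+ 3 + b ^+ 4.
have hY : Y != 0.
  have -> : Y = b ^+ 2 * c by rewrite /Y /c; ring.
  by rewrite mulf_neq0 // expf_neq0.
pose J := if (3 %| f)%N then index_set f else [:: 0%N].
have sJ : size J = (if (3 %| f)%N then 4 else 1)%N by rewrite /J; case: ifP.
have hJ : forall i, i \in index_set f -> exists2 j, j \in J & c ^+ (2 ^ i) = c ^+ (2 ^ j).
  move=> i hi; rewrite /J; case: ifP => h3; first by exists i.
  exists 0%N; first by rewrite inE.
  have g1 : gcdn 3 f = 1%N by apply/eqP; rewrite -/(coprime 3 f) prime_coprime // h3.
  rewrite expn0 expr1.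
  move: hi; rewrite /index_set g1 !divn1 !inE => /or4P [] /eqP ->.
  - by rewrite expn0 expr1.
  - by rewrite -[X in (2 ^ X)%N]mul1n hckf.
  - by rewrite hckf.
  - by rewrite hckf.
pose Pp1 j := quad 1 (1 - c ^+ (2 ^ j)) 1.
pose Pp2 j := quad X (- c ^+ (2 ^ j)) Y.
pose P3 := quad (1 - X) 1 (1 - Y).
pose Pi := (\prod_(j <- J) Pp1 j) * (\prod_(j <- J) Pp2 j) * P3.
have Pi0 : Pi != 0.
  rewrite /Pi !mulf_neq0 //.
  - rewrite prodf_seq_neq0; apply/allP => j _ /=.
    by apply: quad_neq0; rewrite oner_neq0.
  - rewrite prodf_seq_neq0; apply/allP => j _ /=.
    by apply: quad_neq0; rewrite hY.
  - by apply: quad_neq0; rewrite oner_neq0 orbT.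
have sPi : (size Pi <= 4 * size J + 3)%N.
  have h1 := @size_prod3 _ _ J Pp1 (fun j => quad_size _ _ _).
  have h2 := @size_prod3 _ _ J Pp2 (fun j => quad_size _ _ _).
  have h3 := quad_size (1 - X) 1 (1 - Y).
  rewrite /Pi; apply: (leq_trans (size_polyMleq _ _)).
  have h4 := size_polyMleq (\prod_(j <- J) Pp1 j) (\prod_(j <- J) Pp2 j).
  move: h1 h2 h3 h4; rewrite -/P3; lia.
have f1 : (1 <= f)%N by lia.
have [a0 pa0] := @prim_exists f F f1 hF.
set n := (2 ^ f).+1 in pa0 *.
have n17 : (17 <= n)%N.
  have : (2 ^ 4 <= 2 ^ f)%N by rewrite leq_exp2l.
  by rewrite /n; lia.
pose L := [seq a0 ^+ k | k <- [seq k <- iota 0 n | coprime k n]].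
have sL : size L = totient n.
  rewrite size_map size_filter totient_count_coprime /index_iota subn0.
  elim: (iota 0 n) => [|x s IH]; first by rewrite big_nil.
  by rewrite big_cons /= IH coprime_sym.
have uL : uniq L.
  rewrite map_inj_in_uniq ?filter_uniq ?iota_uniq //.
  move=> k1 k2; rewrite !mem_filter !mem_iota /= => /andP [_ h1] /andP [_ h2] /eqP.
  by rewrite (eq_prim_root_expr pa0) !modn_small // => /eqP.
have pL : forall a, a \in L -> n.-primitive_root a.
  move=> a /mapP [k]; rewrite mem_filter => /andP [hk _] ->.
  by rewrite prim_root_exp_coprime.
case: (boolP (all (root Pi) L)) => [allr | ].
  have := max_poly_roots Pi0 allr uL; rewrite sL => h.
  have := tot_bound _ hf; rewrite -/n.
  move=> tb; exfalso; have h' := leq_trans h sPi; rewrite sJ in h'.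
  by move: tb h'; case: ifP => _; lia.
move/allPn => [a aL naroot].
exists a.
have pa := pL a aL.
have an0 : a != 0.
  apply/eqP => a0e; move: (prim_expr_order pa); rewrite a0e expr0n /= => /eqP.
  by rewrite eq_sym oner_eq0.
have hev : Pi.[a] != 0 by [].
rewrite /Pi !hornerM !horner_prod in hev.
move: hev; rewrite !mulf_eq0 !negb_or => /andP [/andP [h1 h2] h3].
have e1 : forall j, j \in J -> (Pp1 j).[a] != 0.
  by move=> j hj; move: h1; rewrite prodf_seq_neq0 => /allP /(_ j hj).
have e2 : forall j, j \in J -> (Pp2 j).[a] != 0.
  by move=> j hj; move: h2; rewrite prodf_seq_neq0 => /allP /(_ j hj).
split; first done.
split; first done.
split.
- move=> i hi; have [j hj ->] := hJ i hi; apply: contra (e1 j hj) => /eqP E.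
  by rewrite /Pp1 quad_eval E; apply/eqP; field.
- move=> i hi; have [j hj ->] := hJ i hi; apply: contra (e2 j hj) => /eqP E.
  by rewrite /Pp2 quad_eval E; apply/eqP; field.
- apply: contra h3 => /eqP E.
  have -> : P3.[a] = a * ((a + a^-1 + 1) - (a * X + a^-1 * Y)).
    by rewrite /P3 quad_eval; field.
  by rewrite E subrr mulr0.
- apply/negP => /eqP E.
  have : a ^+ 3 - 1 = a * (a - 1) * (a + a^-1 + 1) by field.
  rewrite E mulr0 => /eqP; rewrite subr_eq0 -(prim_order_dvd pa) => /dvdn_leq.
  by move=> /(_ isT); lia.
Qed.


Lemma nz_of {F : fieldType} {b m t Q R e : F} {k : nat} :
  m = 0 -> t = 0 -> b != 0 -> e = b ^+ k + m * Q + t * R -> e != 0.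
Proof. by move=> -> -> hb ->; rewrite !mul0r !addr0 expf_neq0. Qed.

Lemma eq_of {F : fieldType} {m t Q R e : F} :
  m = 0 -> t = 0 -> e = m * Q + t * R -> e = 0.
Proof. by move=> -> -> ->; rewrite !mul0r addr0. Qed.

Lemma inv_of {F : fieldType} (x y : F) : x * y = 1 -> x^-1 = y.
Proof.
move=> h; have x0 : x != 0.
  by apply/eqP => x0; move: h; rewrite x0 mul0r => /eqP; rewrite eq_sym oner_eq0.
by rewrite -[y]mul1r -(mulVf x0) -mulrA h mulr1.
Qed.

Lemma prim_of {F : fieldType} (z : F) (n : nat) : (0 < n)%N -> z ^+ n = 1 ->
  (forall d, d \in divisors n -> (d < n)%N -> z ^+ d != 1) -> n.-primitive_root z.
Proof.
move=> n0 zn hd; have [m pm mn] := prim_order_exists n0 zn.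
case: (ltngtP m n) => [lt|gt|e].
- by move: (hd m); rewrite -dvdn_divisors // (prim_expr_order pm) eqxx => /(_ mn lt).
- by move: (dvdn_leq n0 mn); rewrite leqNgt gt.
- by rewrite -e.
Qed.


Lemma case2 (F : finFieldType) (b : F) (hb0 : b != 0) (h2 : (2%:R : F) = 0)
  (hbq : b ^+ (2 ^ 2) = 1 - b)
  (hckf : forall k, (1 + b + b ^+ 2) ^+ (2 ^ (k * 2)) = 1 + b + b ^+ 2) : concl 2 b.
Proof.
have hb4 : b ^+ 4 = 1 - b := hbq.
have hm : b ^+ 4 + b + 1 = 0.
  by apply: (char2_eq (K := 1) h2); rewrite subr0 hb4; ring.
have b15 : b ^+ 15 = 1.
  apply/eqP; rewrite -subr_eq0; apply/eqP.
  apply: (eq_of (Q:=(1%:R * 1 + (1%:R * b) + (1%:R * b ^+ 2) + (1%:R * b ^+ 3) + (1%:R * b ^+ 5) + (1%:R * b ^+ 7) + (1%:R * b ^+ 8) + (1%:R * b ^+ 11))) (R:=(- (1%:R * 1) - (1%:R * b) - (1%:R * b ^+ 2) - (1%:R * b ^+ 3) - (1%:R * b ^+ 4) - (1%:R * b ^+ 5) - (1%:R * b ^+ 6) - (1%:R * b ^+ 7) - (1%:R * b ^+ 8) - (1%:R * b ^+ 9) - (1%:R * b ^+ 11) - (1%:R * b ^+ 12))) hm h2); ring.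
have hinv : (b ^+ 12)^-1 = b ^+ 3 by apply: inv_of; rewrite -exprD.
have hc : forall i, i \in index_set 2 -> (1 + b + b ^+ 2) ^+ (2 ^ i) = 1 + b + b ^+ 2.
  move=> i; rewrite (_ : index_set 2 = [:: 0; 2; 4; 8]%N) // !inE => /or4P [] /eqP ->.
  - exact: (hckf 0). - exact: (hckf 1). - exact: (hckf 2). - exact: (hckf 4).
exists (b ^+ 12); split; first by rewrite expf_neq0.
split.
  apply: prim_of => //.
    by rewrite -exprM (_ : (12 * 5 = 15 * 4)%N) // exprM b15 expr1n.
  move=> d; rewrite (_ : divisors 5 = [:: 1; 5]%N) // !inE => /orP [] /eqP -> // _.
  rewrite expr1 -subr_eq0.
  apply: (nz_of (k:=11) (Q:=(1%:R * 1 + (1%:R * b) + (1%:R * b ^+ 2) + (1%:R * b ^+ 3) + (1%:R * b ^+ 5) + (1%:R * b ^+ 7) + (1%:R * b ^+ 8))) (R:=(- (1%:R * 1) - (1%:R * b) - (1%:R * b ^+ 2) - (1%:R * b ^+ 3) - (1%:R * b ^+ 4) - (1%:R * b ^+ 5) - (1%:R * b ^+ 6) - (1%:R * b ^+ 7) - (1%:R * b ^+ 8) - (1%:R * b ^+ 9) - (1%:R * b ^+ 11))) hm h2 hb0); ring.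
rewrite hinv; split.
- move=> i /hc ->; rewrite -subr_eq0.
  apply: (nz_of (k:=0) (Q:=(1%:R * 1 + (1%:R * b ^+ 2) + (1%:R * b ^+ 4) + (1%:R * b ^+ 5) + (1%:R * b ^+ 8))) (R:=(- (1%:R * 1) - (1%:R * b ^+ 3) - (1%:R * b ^+ 4) - (1%:R * b ^+ 5) - (1%:R * b ^+ 6) - (1%:R * b ^+ 8) - (1%:R * b ^+ 9) - (1%:R * b ^+ 12))) hm h2 hb0); ring.
- move=> i /hc ->; rewrite -subr_eq0.
  apply: (nz_of (k:=10) (Q:=(1%:R * 1 + (1%:R * b ^+ 2) + (1%:R * b ^+ 3) + (1%:R * b ^+ 5) + (1%:R * b ^+ 6) + (1%:R * b ^+ 7) + (1%:R * b ^+ 8) + (1%:R * b ^+ 11) + (1%:R * b ^+ 12))) (R:=(- (1%:R * b ^+ 3) - (1%:R * b ^+ 4) - (1%:R * b ^+ 5) - (2%:R * b ^+ 6) - (2%:R * b ^+ 7) - (1%:R * b ^+ 8) - (1%:R * b ^+ 9) - (1%:R * b ^+ 10) - (1%:R * b ^+ 11) - (2%:R * b ^+ 12) - (1%:R * b ^+ 13) - (1%:R * b ^+ 15) - (1%:R * b ^+ 16))) hm h2 hb0); ring.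
- rewrite -subr_eq0.
  apply: (nz_of (k:=5) (Q:=(1%:R * 1 + (1%:R * b) + (1%:R * b ^+ 2) + (1%:R * b ^+ 4) + (1%:R * b ^+ 7) + (1%:R * b ^+ 11) + (1%:R * b ^+ 12))) (R:=(- (1%:R * b) - (1%:R * b ^+ 2) - (1%:R * b ^+ 4) - (2%:R * b ^+ 5) - (1%:R * b ^+ 6) - (1%:R * b ^+ 7) - (1%:R * b ^+ 8) - (1%:R * b ^+ 11) - (1%:R * b ^+ 12) - (1%:R * b ^+ 13) - (1%:R * b ^+ 15) - (1%:R * b ^+ 16))) hm h2 hb0); ring.
- apply: (nz_of (k:=5) (Q:=(1%:R * 1 + (1%:R * b) + (1%:R * b ^+ 2) + (1%:R * b ^+ 4) + (1%:R * b ^+ 5) + (1%:R * b ^+ 8))) (R:=(- (1%:R * b) - (1%:R * b ^+ 2) - (1%:R * b ^+ 4) - (2%:R * b ^+ 5) - (1%:R * b ^+ 6) - (1%:R * b ^+ 8) - (1%:R * b ^+ 9))) hm h2 hb0); ring.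
Qed.

Lemma case3 (F : finFieldType) (b : F) (hb0 : b != 0) (h2 : (2%:R : F) = 0)
  (hbq : b ^+ (2 ^ 3) = 1 - b) (hc0 : 1 + b + b ^+ 2 != 0)
  (hckf : forall k, (1 + b + b ^+ 2) ^+ (2 ^ (k * 3)) = 1 + b + b ^+ 2) : concl 3 b.
Proof.
have hb8 : b ^+ 8 = 1 - b := hbq.
have hm8 : b ^+ 8 + b + 1 = 0.
  by apply: (char2_eq (K := 1) h2); rewrite subr0 hb8; ring.
have hm : (1%:R * 1 + (1%:R * b ^+ 2) + (1%:R * b ^+ 3) + (1%:R * b ^+ 5) + (1%:R * b ^+ 6)) = 0.
  have : (1 + b + b ^+ 2) * (1%:R * 1 + (1%:R * b ^+ 2) + (1%:R * b ^+ 3) + (1%:R * b ^+ 5) + (1%:R * b ^+ 6)) = 0.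
    apply: (eq_of (Q:=(1%:R * 1)) (R:=(1%:R * b ^+ 2 + (1%:R * b ^+ 3) + (1%:R * b ^+ 4) + (1%:R * b ^+ 5) + (1%:R * b ^+ 6) + (1%:R * b ^+ 7))) hm8 h2); ring.
  by move/eqP; rewrite mulf_eq0 (negbTE hc0) => /eqP.
have b63 : b ^+ 63 = 1.
  apply/eqP; rewrite -subr_eq0; apply/eqP.
  apply: (eq_of (Q:=(1%:R * 1 + (1%:R * b ^+ 2) + (1%:R * b ^+ 3) + (1%:R * b ^+ 4) + (1%:R * b ^+ 5) + (1%:R * b ^+ 6) + (1%:R * b ^+ 7) + (1%:R * b ^+ 10) + (1%:R * b ^+ 12) + (1%:R * b ^+ 14) + (1%:R * b ^+ 18) + (1%:R * b ^+ 19) + (1%:R * b ^+ 22) + (1%:R * b ^+ 23) + (1%:R * b ^+ 24) + (1%:R * b ^+ 25) + (1%:R * b ^+ 27) + (1%:R * b ^+ 28) + (1%:R * b ^+ 29) + (1%:R * b ^+ 31) + (1%:R * b ^+ 33) + (1%:R * b ^+ 34) + (1%:R * b ^+ 36) + (1%:R * b ^+ 39) + (1%:R * b ^+ 40) + (1%:R * b ^+ 42) + (1%:R * b ^+ 43) + (1%:R * b ^+ 47) + (1%:R * b ^+ 50) + (1%:R * b ^+ 55) + (1%:R * b ^+ 56) + (1%:R * b ^+ 57))) (R:=(- (1%:R * 1) - (1%:R * b ^+ 2) - (1%:R * b ^+ 3) - (1%:R * b ^+ 4) - (2%:R * b ^+ 5) - (2%:R * b ^+ 6) - (2%:R * b ^+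 7) - (2%:R * b ^+ 8) - (2%:R * b ^+ 9) - (2%:R * b ^+ 10) - (1%:R * b ^+ 11) - (2%:R * b ^+ 12) - (1%:R * b ^+ 13) - (1%:R * b ^+ 14) - (1%:R * b ^+ 15) - (1%:R * b ^+ 16) - (1%:R * b ^+ 17) - (1%:R * b ^+ 18) - (1%:R * b ^+ 19) - (1%:R * b ^+ 20) - (1%:R * b ^+ 21) - (1%:R * b ^+ 22) - (1%:R * b ^+ 23) - (2%:R * b ^+ 24) - (2%:R * b ^+ 25) - (1%:R * b ^+ 26) - (2%:R * b ^+ 27) - (2%:R * b ^+ 28) - (2%:R * b ^+ 29) - (2%:R * b ^+ 30) - (2%:R * b ^+ 31) - (1%:R * b ^+ 32) - (2%:R * b ^+ 33) - (2%:R * b ^+ 34) - (1%:R * b ^+ 35) - (2%:R * b ^+ 36) - (1%:R * b ^+ 37) - (1%:R * b ^+ 38) - (2%:R * b ^+ 39) - (1%:R * b ^+ 40) - (1%:R * b ^+ 41) - (2%:R * b ^+ 42) - (1%:R * b ^+ 43) - (1%:R * b ^+ 44) - (2%:R * b ^+ 45) - (1%:R * b ^+ 46) - (1%:R * b ^+ 47) - (1%:R * b ^+ 48) - (1%:R * b ^+ 49) - (1%:R * b ^+ 50) - (1%:R * b ^+ 52) - (1%:R * b ^+ 53) - (1%:R * b ^+ 55) - (1%:R * b ^+ 56) - (1%:R * b ^+ 57) - (1%:R * b ^+ 58) - (1%:R * b ^+ 59) - (1%:R * b ^+ 60) - (1%:R * b ^+ 61) - (1%:R * b ^+ 62))) hm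 h2); ring.
have hinv : (b ^+ 56)^-1 = b ^+ 7 by apply: inv_of; rewrite -exprD.
have hc3 : (1 + b + b ^+ 2) ^+ (2 ^ 3) = 1 + b + b ^+ 2 := hckf 1.
exists (b ^+ 56); split; first by rewrite expf_neq0.
split.
  apply: prim_of => //.
    by rewrite -exprM (_ : (56 * 9 = 63 * 8)%N) // exprM b63 expr1n.
  move=> d; rewrite (_ : divisors 9 = [:: 1; 3; 9]%N) // !inE => /or3P [] /eqP -> // _.
    rewrite expr1 -subr_eq0.
    apply: (nz_of (k:=55) (Q:=(1%:R * 1 + (1%:R * b ^+ 2) + (1%:R * b ^+ 3) + (1%:R * b ^+ 4) + (1%:R * b ^+ 5) + (1%:R * b ^+ 6) + (1%:R * b ^+ 7) + (1%:R * b ^+ 10) + (1%:R * b ^+ 12) + (1%:R * b ^+ 14) + (1%:R * b ^+ 18) + (1%:R * b ^+ 19) + (1%:R * b ^+ 22) + (1%:R * b ^+ 23) + (1%:R * b ^+ 24) + (1%:R * b ^+ 25) + (1%:R * b ^+ 27) + (1%:R * b ^+ 28) + (1%:R * b ^+ 29) + (1%:R * b ^+ 31) + (1%:R * b ^+ 33) + (1%:R * b ^+ 34) + (1%:R * b ^+ 36) + (1%:R * b ^+ 39) + (1%:R * b ^+ 40) + (1%:R * b ^+ 42) + (1%:R * b ^+ 43) + (1%:R * b ^+ 47) + (1%:R * b ^+ 50))) (R:=(- (1%:R * 1) - (1%:R * b ^+ 2) - (1%:R * b ^+ 3) - (1%:R * b ^+ 4) - (2%:R * b ^+ 5) - (2%:R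 * b ^+ 6) - (2%:R * b ^+ 7) - (2%:R * b ^+ 8) - (2%:R * b ^+ 9) - (2%:R * b ^+ 10) - (1%:R * b ^+ 11) - (2%:R * b ^+ 12) - (1%:R * b ^+ 13) - (1%:R * b ^+ 14) - (1%:R * b ^+ 15) - (1%:R * b ^+ 16) - (1%:R * b ^+ 17) - (1%:R * b ^+ 18) - (1%:R * b ^+ 19) - (1%:R * b ^+ 20) - (1%:R * b ^+ 21) - (1%:R * b ^+ 22) - (1%:R * b ^+ 23) - (2%:R * b ^+ 24) - (2%:R * b ^+ 25) - (1%:R * b ^+ 26) - (2%:R * b ^+ 27) - (2%:R * b ^+ 28) - (2%:R * b ^+ 29) - (2%:R * b ^+ 30) - (2%:R * b ^+ 31) - (1%:R * b ^+ 32) - (2%:R * b ^+ 33) - (2%:R * b ^+ 34) - (1%:R * b ^+ 35) - (2%:R * b ^+ 36) - (1%:R * b ^+ 37) - (1%:R * b ^+ 38) - (2%:R * b ^+ 39) - (1%:R * b ^+ 40) - (1%:R * b ^+ 41) - (2%:R * b ^+ 42) - (1%:R * b ^+ 43) - (1%:R * b ^+ 44) - (2%:R * b ^+ 45) - (1%:R * b ^+ 46) - (1%:R * b ^+ 47) - (1%:R * b ^+ 48) - (1%:R * b ^+ 49) - (1%:R * b ^+ 50) - (1%:R * b ^+ 52) - (1%:R * b ^+ 53) - (1%:R * b ^+ 55))) hm h2 hb0); ring.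
  rewrite -exprM (_ : (56 * 3 = 63 * 2 + 42)%N) // exprD exprM b63 expr1n mul1r -subr_eq0.
  apply: (nz_of (k:=21) (Q:=(1%:R * 1 + (1%:R * b ^+ 2) + (1%:R * b ^+ 3) + (1%:R * b ^+ 4) + (1%:R * b ^+ 5) + (1%:R * b ^+ 6) + (1%:R * b ^+ 7) + (1%:R * b ^+ 10) + (1%:R * b ^+ 12) + (1%:R * b ^+ 14) + (1%:R * b ^+ 18) + (1%:R * b ^+ 19) + (1%:R * b ^+ 21) + (1%:R * b ^+ 22) + (1%:R * b ^+ 26) + (1%:R * b ^+ 29) + (1%:R * b ^+ 34) + (1%:R * b ^+ 35) + (1%:R * b ^+ 36))) (R:=(- (1%:R * 1) - (1%:R * b ^+ 2) - (1%:R * b ^+ 3) - (1%:R * b ^+ 4) - (2%:R * b ^+ 5) - (2%:R * b ^+ 6) - (2%:R * b ^+ 7) - (2%:R * b ^+ 8) - (2%:R * b ^+ 9) - (2%:R * b ^+ 10) - (1%:R * b ^+ 11) - (2%:R * b ^+ 12) - (1%:R * b ^+ 13) - (1%:R * b ^+ 14) - (1%:R * b ^+ 15) - (1%:R * b ^+ 16) - (1%:R * b ^+ 17) - (1%:R * b ^+ 18) - (1%:R * b ^+ 19) - (1%:R * b ^+ 20) - (2%:R * b ^+ 21) - (1%:R * b ^+ 22) - (1%:R * b ^+ 23) - (2%:R * b ^+ 24) - (1%:R * b ^+ 25) - (1%:R * b ^+ 26) - (1%:R * b ^+ 27) - (1%:R * b ^+ 28) - (1%:R * b ^+ 29) - (1%:R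 * b ^+ 31) - (1%:R * b ^+ 32) - (1%:R * b ^+ 34) - (1%:R * b ^+ 35) - (1%:R * b ^+ 36) - (1%:R * b ^+ 37) - (1%:R * b ^+ 38) - (1%:R * b ^+ 39) - (1%:R * b ^+ 40) - (1%:R * b ^+ 41))) hm h2 hb0); ring.
rewrite hinv; split.
- move=> i; rewrite (_ : index_set 3 = [:: 0; 3; 2; 4]%N) // !inE => /or4P [] /eqP ->.
  + rewrite expn0 expr1 -subr_eq0.
    apply: (nz_of (k:=18) (Q:=(1%:R * b + (1%:R * b ^+ 2) + (1%:R * b ^+ 3) + (1%:R * b ^+ 7) + (1%:R * b ^+ 10) + (1%:R * b ^+ 15) + (1%:R * b ^+ 16) + (1%:R * b ^+ 17) + (1%:R * b ^+ 18) + (1%:R * b ^+ 20) + (1%:R * b ^+ 21) + (1%:R * b ^+ 22) + (1%:R * b ^+ 24) + (1%:R * b ^+ 26) + (1%:R * b ^+ 27) + (1%:R * b ^+ 29) + (1%:R * b ^+ 32) + (1%:R * b ^+ 33) + (1%:R * b ^+ 35) + (1%:R * b ^+ 36) + (1%:R * b ^+ 40) + (1%:R * b ^+ 43) + (1%:R * b ^+ 48) + (1%:R * b ^+ 49) + (1%:R * b ^+ 50))) (R:=(- (1%:R * b ^+ 3) - (1%:R * b ^+ 4) - (1%:R * b ^+ 5) - (1%:R * b ^+ 6) - (2%:R * b ^+ 7) - (1%:R * b ^+ 8) - (1%:R * b ^+ 9) - (1%:R * b ^+ 10) - (1%:R * b ^+ 12) - (1%:R * b ^+ 13) - (1%:R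 * b ^+ 15) - (1%:R * b ^+ 16) - (1%:R * b ^+ 17) - (2%:R * b ^+ 18) - (1%:R * b ^+ 19) - (2%:R * b ^+ 20) - (2%:R * b ^+ 21) - (2%:R * b ^+ 22) - (2%:R * b ^+ 23) - (2%:R * b ^+ 24) - (1%:R * b ^+ 25) - (2%:R * b ^+ 26) - (2%:R * b ^+ 27) - (1%:R * b ^+ 28) - (2%:R * b ^+ 29) - (1%:R * b ^+ 30) - (1%:R * b ^+ 31) - (2%:R * b ^+ 32) - (1%:R * b ^+ 33) - (1%:R * b ^+ 34) - (2%:R * b ^+ 35) - (1%:R * b ^+ 36) - (1%:R * b ^+ 37) - (2%:R * b ^+ 38) - (1%:R * b ^+ 39) - (1%:R * b ^+ 40) - (1%:R * b ^+ 41) - (1%:R * b ^+ 42) - (1%:R * b ^+ 43) - (1%:R * b ^+ 45) - (1%:R * b ^+ 46) - (1%:R * b ^+ 48) - (1%:R * b ^+ 49) - (1%:R * b ^+ 50) - (1%:R * b ^+ 51) - (1%:R * b ^+ 52) - (1%:R * b ^+ 53) - (1%:R * b ^+ 54) - (1%:R * b ^+ 55) - (1%:R * b ^+ 56))) hm h2 hb0); ring.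
  + rewrite hc3 -subr_eq0.
    apply: (nz_of (k:=18) (Q:=(1%:R * b + (1%:R * b ^+ 2) + (1%:R * b ^+ 3) + (1%:R * b ^+ 7) + (1%:R * b ^+ 10) + (1%:R * b ^+ 15) + (1%:R * b ^+ 16) + (1%:R * b ^+ 17) + (1%:R * b ^+ 18) + (1%:R * b ^+ 20) + (1%:R * b ^+ 21) + (1%:R * b ^+ 22) + (1%:R * b ^+ 24) + (1%:R * b ^+ 26) + (1%:R * b ^+ 27) + (1%:R * b ^+ 29) + (1%:R * b ^+ 32) + (1%:R * b ^+ 33) + (1%:R * b ^+ 35) + (1%:R * b ^+ 36) + (1%:R * b ^+ 40) + (1%:R * b ^+ 43) + (1%:R * b ^+ 48) + (1%:R * b ^+ 49) + (1%:R * b ^+ 50))) (R:=(- (1%:R * b ^+ 3) - (1%:R * b ^+ 4) - (1%:R * b ^+ 5) - (1%:R * b ^+ 6) - (2%:R * b ^+ 7) - (1%:R * b ^+ 8) - (1%:R * b ^+ 9) - (1%:R * b ^+ 10) - (1%:R * b ^+ 12) - (1%:R * b ^+ 13) - (1%:R * b ^+ 15) - (1%:R * b ^+ 16) - (1%:R * b ^+ 17) - (2%:R * b ^+ 18) - (1%:R * b ^+ 19) - (2%:R * b ^+ 20) - (2%:R * b ^+ 21) - (2%:R * b ^+ 22) - (2%:R * b ^+ 23) - (2%:R * b ^+ 24) - (1%:R * b ^+ 25) - (2%:R * b ^+ 26) - (2%:R * b ^+ 27) - (1%:R * b ^+ 28) - (2%:R * b ^+ 29) - (1%:R * b ^+ 30)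 - (1%:R * b ^+ 31) - (2%:R * b ^+ 32) - (1%:R * b ^+ 33) - (1%:R * b ^+ 34) - (2%:R * b ^+ 35) - (1%:R * b ^+ 36) - (1%:R * b ^+ 37) - (2%:R * b ^+ 38) - (1%:R * b ^+ 39) - (1%:R * b ^+ 40) - (1%:R * b ^+ 41) - (1%:R * b ^+ 42) - (1%:R * b ^+ 43) - (1%:R * b ^+ 45) - (1%:R * b ^+ 46) - (1%:R * b ^+ 48) - (1%:R * b ^+ 49) - (1%:R * b ^+ 50) - (1%:R * b ^+ 51) - (1%:R * b ^+ 52) - (1%:R * b ^+ 53) - (1%:R * b ^+ 54) - (1%:R * b ^+ 55) - (1%:R * b ^+ 56))) hm h2 hb0); ring.
  + rewrite (_ : (2 ^ 2 = 4)%N) // -subr_eq0.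
    apply: (nz_of (k:=0) (Q:=(1%:R * 1 + (1%:R * b ^+ 2) + (1%:R * b ^+ 3) + (1%:R * b ^+ 5) + (1%:R * b ^+ 7) + (1%:R * b ^+ 11) + (1%:R * b ^+ 12) + (1%:R * b ^+ 15) + (1%:R * b ^+ 16) + (1%:R * b ^+ 17) + (1%:R * b ^+ 18) + (1%:R * b ^+ 20) + (1%:R * b ^+ 21) + (1%:R * b ^+ 22) + (1%:R * b ^+ 24) + (1%:R * b ^+ 26) + (1%:R * b ^+ 27) + (1%:R * b ^+ 29) + (1%:R * b ^+ 32) + (1%:R * b ^+ 33) + (1%:R * b ^+ 35) + (1%:R * b ^+ 36) + (1%:R * b ^+ 40) + (1%:R * b ^+ 43) + (1%:R * b ^+ 48) + (1%:R * b ^+ 49) + (1%:R * b ^+ 50))) (R:=(- (1%:R * 1) + (2%:R * b) + (4%:R * b ^+ 2) + (7%:R * b ^+ 3) + (9%:R * b ^+ 4) + (6%:R * b ^+ 5) + (4%:R * b ^+ 6) - (1%:R * b ^+ 8) - (1%:R * b ^+ 9) - (1%:R * b ^+ 10) - (1%:R * b ^+ 11) - (1%:R * b ^+ 12) - (1%:R * b ^+ 13) - (1%:R * b ^+ 14) - (1%:R * b ^+ 15) - (1%:R * b ^+ 16) - (2%:R * b ^+ 17) - (2%:R * b ^+ 18) - (1%:R * b ^+ 19) - (2%:R * b ^+ 20) - (2%:R * b ^+ 21) - (2%:R * b ^+ 22) - (2%:R * b ^+ 23) - (2%:R * b ^+ 24) - (1%:R * b ^+ 25) - (2%:R * b ^+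 26) - (2%:R * b ^+ 27) - (1%:R * b ^+ 28) - (2%:R * b ^+ 29) - (1%:R * b ^+ 30) - (1%:R * b ^+ 31) - (2%:R * b ^+ 32) - (1%:R * b ^+ 33) - (1%:R * b ^+ 34) - (2%:R * b ^+ 35) - (1%:R * b ^+ 36) - (1%:R * b ^+ 37) - (2%:R * b ^+ 38) - (1%:R * b ^+ 39) - (1%:R * b ^+ 40) - (1%:R * b ^+ 41) - (1%:R * b ^+ 42) - (1%:R * b ^+ 43) - (1%:R * b ^+ 45) - (1%:R * b ^+ 46) - (1%:R * b ^+ 48) - (1%:R * b ^+ 49) - (1%:R * b ^+ 50) - (1%:R * b ^+ 51) - (1%:R * b ^+ 52) - (1%:R * b ^+ 53) - (1%:R * b ^+ 54) - (1%:R * b ^+ 55) - (1%:R * b ^+ 56))) hm h2 hb0); ring.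
  + rewrite (_ : (2 ^ 4 = 16)%N) // -subr_eq0.
    apply: (nz_of (k:=9) (Q:=(1%:R * b ^+ 7 + (1%:R * b ^+ 10) + (1%:R * b ^+ 15) + (1%:R * b ^+ 17) + (1%:R * b ^+ 18) + (1%:R * b ^+ 19) + (1%:R * b ^+ 20) + (1%:R * b ^+ 21) + (1%:R * b ^+ 22) + (1%:R * b ^+ 25) + (1%:R * b ^+ 27) + (1%:R * b ^+ 29) + (1%:R * b ^+ 32) + (1%:R * b ^+ 33) + (1%:R * b ^+ 35) + (1%:R * b ^+ 36) + (1%:R * b ^+ 40) + (1%:R * b ^+ 43) + (1%:R * b ^+ 48) + (1%:R * b ^+ 49) + (1%:R * b ^+ 50))) (R:=(8%:R * b + (68%:R * b ^+ 2) + (400%:R * b ^+ 3) + (1810%:R * b ^+ 4) + (6664%:R * b ^+ 5) + (20664%:R * b ^+ 6) + (55223%:R * b ^+ 7) + (129285%:R * b ^+ 8) + (268319%:R * b ^+ 9) + (498107%:R * b ^+ 10) + (832728%:R * b ^+ 11) + (1260167%:R * b ^+ 12) + (1732919%:R * b ^+ 13) + (2171580%:R * b ^+ 14) + (2484575%:R * b ^+ 15) + (2598313%:R * b ^+ 16) + (2484575%:R * b ^+ 17) + (2171579%:R * b ^+ 18) + (1732919%:R * b ^+ 19) + (1260166%:R * b ^+ 20) + (832726%:R * b ^+ 21) + (498106%:R * b ^+ 22) + (268318%:R * b ^+ 23) + (129283%:R * b ^+ 24) + (55222%:R * b ^+ 25) + (20663%:R * b ^+ 26) + (6662%:R * b ^+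 27) + (1809%:R * b ^+ 28) + (399%:R * b ^+ 29) + (67%:R * b ^+ 30) + (7%:R * b ^+ 31) - (1%:R * b ^+ 32) - (1%:R * b ^+ 33) - (1%:R * b ^+ 34) - (2%:R * b ^+ 35) - (1%:R * b ^+ 36) - (1%:R * b ^+ 37) - (2%:R * b ^+ 38) - (1%:R * b ^+ 39) - (1%:R * b ^+ 40) - (1%:R * b ^+ 41) - (1%:R * b ^+ 42) - (1%:R * b ^+ 43) - (1%:R * b ^+ 45) - (1%:R * b ^+ 46) - (1%:R * b ^+ 48) - (1%:R * b ^+ 49) - (1%:R * b ^+ 50) - (1%:R * b ^+ 51) - (1%:R * b ^+ 52) - (1%:R * b ^+ 53) - (1%:R * b ^+ 54) - (1%:R * b ^+ 55) - (1%:R * b ^+ 56))) hm h2 hb0); ring.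
- move=> i; rewrite (_ : index_set 3 = [:: 0; 3; 2; 4]%N) // !inE => /or4P [] /eqP ->.
  + rewrite expn0 expr1 -subr_eq0.
    apply: (nz_of (k:=45) (Q:=(1%:R * 1 + (1%:R * b) + (1%:R * b ^+ 4) + (1%:R * b ^+ 5) + (1%:R * b ^+ 6) + (1%:R * b ^+ 7) + (1%:R * b ^+ 11) + (1%:R * b ^+ 14) + (1%:R * b ^+ 19) + (1%:R * b ^+ 20) + (1%:R * b ^+ 21) + (1%:R * b ^+ 27) + (1%:R * b ^+ 29) + (1%:R * b ^+ 30) + (1%:R * b ^+ 31) + (1%:R * b ^+ 32) + (1%:R * b ^+ 33) + (1%:R * b ^+ 34) + (1%:R * b ^+ 37) + (1%:R * b ^+ 39) + (1%:R * b ^+ 41) + (1%:R * b ^+ 46) + (1%:R * b ^+ 47) + (1%:R * b ^+ 48) + (1%:R * b ^+ 54))) (R:=(- (1%:R * b ^+ 3) - (1%:R * b ^+ 4) - (1%:R * b ^+ 5) - (2%:R * b ^+ 6) - (2%:R * b ^+ 7) - (1%:R * b ^+ 8) - (2%:R * b ^+ 9) - (2%:R * b ^+ 10) - (2%:R * b ^+ 11) - (1%:R * b ^+ 12) - (1%:R * b ^+ 13) - (1%:R * b ^+ 14) - (1%:R * b ^+ 16) - (1%:R * b ^+ 17) - (1%:R * b ^+ 19) - (1%:R * b ^+ 20) - (1%:R * b ^+ 21) - (1%:R * b ^+ 22) - (1%:R * b ^+ 23) - (1%:R * b ^+ 24) - (1%:R * b ^+ 25) - (1%:R * b ^+ 26)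 - (1%:R * b ^+ 27) - (1%:R * b ^+ 29) - (1%:R * b ^+ 30) - (1%:R * b ^+ 31) - (2%:R * b ^+ 32) - (2%:R * b ^+ 33) - (2%:R * b ^+ 34) - (2%:R * b ^+ 35) - (2%:R * b ^+ 36) - (2%:R * b ^+ 37) - (1%:R * b ^+ 38) - (2%:R * b ^+ 39) - (1%:R * b ^+ 40) - (1%:R * b ^+ 41) - (1%:R * b ^+ 42) - (1%:R * b ^+ 43) - (1%:R * b ^+ 44) - (1%:R * b ^+ 45) - (1%:R * b ^+ 46) - (1%:R * b ^+ 47) - (1%:R * b ^+ 48) - (1%:R * b ^+ 49) - (1%:R * b ^+ 50) - (1%:R * b ^+ 51) - (1%:R * b ^+ 52) - (1%:R * b ^+ 53) - (1%:R * b ^+ 54) - (1%:R * b ^+ 56) - (1%:R * b ^+ 57) - (1%:R * b ^+ 59) - (1%:R * b ^+ 60))) hm h2 hb0); ring.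
  + rewrite hc3 -subr_eq0.
    apply: (nz_of (k:=45) (Q:=(1%:R * 1 + (1%:R * b) + (1%:R * b ^+ 4) + (1%:R * b ^+ 5) + (1%:R * b ^+ 6) + (1%:R * b ^+ 7) + (1%:R * b ^+ 11) + (1%:R * b ^+ 14) + (1%:R * b ^+ 19) + (1%:R * b ^+ 20) + (1%:R * b ^+ 21) + (1%:R * b ^+ 27) + (1%:R * b ^+ 29) + (1%:R * b ^+ 30) + (1%:R * b ^+ 31) + (1%:R * b ^+ 32) + (1%:R * b ^+ 33) + (1%:R * b ^+ 34) + (1%:R * b ^+ 37) + (1%:R * b ^+ 39) + (1%:R * b ^+ 41) + (1%:R * b ^+ 46) + (1%:R * b ^+ 47) + (1%:R * b ^+ 48) + (1%:R * b ^+ 54))) (R:=(- (1%:R * b ^+ 3) - (1%:R * b ^+ 4) - (1%:R * b ^+ 5) - (2%:R * b ^+ 6) - (2%:R * b ^+ 7) - (1%:R * b ^+ 8) - (2%:R * b ^+ 9) - (2%:R * b ^+ 10) - (2%:R * b ^+ 11) - (1%:R * b ^+ 12) - (1%:R * b ^+ 13) - (1%:R * b ^+ 14) - (1%:R * b ^+ 16) - (1%:R * b ^+ 17) - (1%:R * b ^+ 19) - (1%:R * b ^+ 20) - (1%:R * b ^+ 21) - (1%:R * b ^+ 22) - (1%:R * b ^+ 23) - (1%:R * b ^+ 24) - (1%:R * b ^+ 25) - (1%:R * b ^+ 26) - (1%:R * b ^+ 27) - (1%:R * b ^+ 29) - (1%:R * b ^+ 30) - (1%:R * b ^+ 31) -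 (2%:R * b ^+ 32) - (2%:R * b ^+ 33) - (2%:R * b ^+ 34) - (2%:R * b ^+ 35) - (2%:R * b ^+ 36) - (2%:R * b ^+ 37) - (1%:R * b ^+ 38) - (2%:R * b ^+ 39) - (1%:R * b ^+ 40) - (1%:R * b ^+ 41) - (1%:R * b ^+ 42) - (1%:R * b ^+ 43) - (1%:R * b ^+ 44) - (1%:R * b ^+ 45) - (1%:R * b ^+ 46) - (1%:R * b ^+ 47) - (1%:R * b ^+ 48) - (1%:R * b ^+ 49) - (1%:R * b ^+ 50) - (1%:R * b ^+ 51) - (1%:R * b ^+ 52) - (1%:R * b ^+ 53) - (1%:R * b ^+ 54) - (1%:R * b ^+ 56) - (1%:R * b ^+ 57) - (1%:R * b ^+ 59) - (1%:R * b ^+ 60))) hm h2 hb0); ring.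
  + rewrite (_ : (2 ^ 2 = 4)%N) // -subr_eq0.
    apply: (nz_of (k:=54) (Q:=(1%:R * 1 + (1%:R * b ^+ 2) + (1%:R * b ^+ 3) + (1%:R * b ^+ 5) + (1%:R * b ^+ 54))) (R:=(2%:R * b + (4%:R * b ^+ 2) + (7%:R * b ^+ 3) + (9%:R * b ^+ 4) + (6%:R * b ^+ 5) + (4%:R * b ^+ 6) + (1%:R * b ^+ 7) - (1%:R * b ^+ 8) - (1%:R * b ^+ 9) - (1%:R * b ^+ 10) - (1%:R * b ^+ 11) - (1%:R * b ^+ 54) - (1%:R * b ^+ 56) - (1%:R * b ^+ 57) - (1%:R * b ^+ 59) - (1%:R * b ^+ 60))) hm h2 hb0); ring.
  + rewrite (_ : (2 ^ 4 = 16)%N) // -subr_eq0.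
    apply: (nz_of (k:=27) (Q:=(1%:R * 1 + (1%:R * b ^+ 2) + (1%:R * b ^+ 3) + (1%:R * b ^+ 4) + (1%:R * b ^+ 5) + (1%:R * b ^+ 6) + (1%:R * b ^+ 7) + (1%:R * b ^+ 9) + (1%:R * b ^+ 12) + (1%:R * b ^+ 13) + (1%:R * b ^+ 15) + (1%:R * b ^+ 18) + (1%:R * b ^+ 19) + (1%:R * b ^+ 21) + (1%:R * b ^+ 22) + (1%:R * b ^+ 26) + (1%:R * b ^+ 27) + (1%:R * b ^+ 30) + (1%:R * b ^+ 31) + (1%:R * b ^+ 33) + (1%:R * b ^+ 34) + (1%:R * b ^+ 38) + (1%:R * b ^+ 41) + (1%:R * b ^+ 46) + (1%:R * b ^+ 47) + (1%:R * b ^+ 48) + (1%:R * b ^+ 54))) (R:=(8%:R * b + (67%:R * b ^+ 2) + (399%:R * b ^+ 3) + (1809%:R * b ^+ 4) + (6662%:R * b ^+ 5) + (20662%:R * b ^+ 6) + (55222%:R * b ^+ 7) + (129283%:R * b ^+ 8) + (268317%:R * b ^+ 9) + (498106%:R * b ^+ 10) + (832726%:R * b ^+ 11) + (1260166%:R * b ^+ 12) + (1732919%:R * b ^+ 13) + (2171579%:R * b ^+ 14) + (2484574%:R * b ^+ 15) + (2598313%:R * b ^+ 16) + (2484575%:R * b ^+ 17) + (2171578%:R * b ^+ 18) + (1732919%:R * b ^+ 19) + (1260167%:R * b ^+ 20) + (832726%:R * b ^+ 21) + (498107%:R * b ^+ 22) + (268319%:R * b ^+ 23) + (129283%:R * b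 ^+ 24) + (55223%:R * b ^+ 25) + (20663%:R * b ^+ 26) + (6662%:R * b ^+ 27) + (1809%:R * b ^+ 28) + (399%:R * b ^+ 29) + (67%:R * b ^+ 30) + (7%:R * b ^+ 31) - (1%:R * b ^+ 32) - (2%:R * b ^+ 33) - (1%:R * b ^+ 34) - (1%:R * b ^+ 35) - (2%:R * b ^+ 36) - (1%:R * b ^+ 37) - (1%:R * b ^+ 38) - (1%:R * b ^+ 39) - (1%:R * b ^+ 40) - (1%:R * b ^+ 41) - (1%:R * b ^+ 43) - (1%:R * b ^+ 44) - (1%:R * b ^+ 46) - (1%:R * b ^+ 47) - (1%:R * b ^+ 48) - (1%:R * b ^+ 49) - (1%:R * b ^+ 50) - (1%:R * b ^+ 51) - (1%:R * b ^+ 52) - (1%:R * b ^+ 53) - (1%:R * b ^+ 54) - (1%:R * b ^+ 56) - (1%:R * b ^+ 57) - (1%:R * b ^+ 59) - (1%:R * b ^+ 60))) hm h2 hb0); ring.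
- rewrite -subr_eq0.
  apply: (nz_of (k:=36) (Q:=(1%:R * 1 + (1%:R * b ^+ 2) + (1%:R * b ^+ 3) + (1%:R * b ^+ 4) + (1%:R * b ^+ 5) + (1%:R * b ^+ 6) + (1%:R * b ^+ 10) + (1%:R * b ^+ 11) + (1%:R * b ^+ 14) + (1%:R * b ^+ 15) + (1%:R * b ^+ 16) + (1%:R * b ^+ 17) + (1%:R * b ^+ 19) + (1%:R * b ^+ 20) + (1%:R * b ^+ 21) + (1%:R * b ^+ 23) + (1%:R * b ^+ 25) + (1%:R * b ^+ 26) + (1%:R * b ^+ 28) + (1%:R * b ^+ 31) + (1%:R * b ^+ 32) + (1%:R * b ^+ 34) + (1%:R * b ^+ 35) + (1%:R * b ^+ 36) + (1%:R * b ^+ 38) + (1%:R * b ^+ 40) + (1%:R * b ^+ 41) + (1%:R * b ^+ 43) + (1%:R * b ^+ 46) + (1%:R * b ^+ 47) + (1%:R * b ^+ 49) + (1%:R * b ^+ 50) + (1%:R * b ^+ 54))) (R:=(- (1%:R * b ^+ 2) - (1%:R * b ^+ 3) - (1%:R * b ^+ 4) - (2%:R * b ^+ 5) - (2%:R * b ^+ 6) - (1%:R * b ^+ 7) - (2%:R * b ^+ 8) - (2%:R * b ^+ 9) - (2%:R * b ^+ 10) - (2%:R * b ^+ 11) - (1%:R * b ^+ 12) - (1%:R * b ^+ 13) - (1%:R * b ^+ 14) - (1%:R * b ^+ 15) - (2%:R * b ^+ 16) - (2%:R * b ^+ 17) - (1%:R * b ^+ 18) - (2%:R * b ^+ 19)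 - (2%:R * b ^+ 20) - (2%:R * b ^+ 21) - (2%:R * b ^+ 22) - (2%:R * b ^+ 23) - (1%:R * b ^+ 24) - (2%:R * b ^+ 25) - (2%:R * b ^+ 26) - (1%:R * b ^+ 27) - (2%:R * b ^+ 28) - (1%:R * b ^+ 29) - (1%:R * b ^+ 30) - (2%:R * b ^+ 31) - (1%:R * b ^+ 32) - (1%:R * b ^+ 33) - (2%:R * b ^+ 34) - (1%:R * b ^+ 35) - (2%:R * b ^+ 36) - (2%:R * b ^+ 37) - (2%:R * b ^+ 38) - (1%:R * b ^+ 39) - (2%:R * b ^+ 40) - (2%:R * b ^+ 41) - (1%:R * b ^+ 42) - (2%:R * b ^+ 43) - (1%:R * b ^+ 44) - (1%:R * b ^+ 45) - (2%:R * b ^+ 46) - (1%:R * b ^+ 47) - (1%:R * b ^+ 48) - (2%:R * b ^+ 49) - (1%:R * b ^+ 50) - (1%:R * b ^+ 51) - (2%:R * b ^+ 52) - (1%:R * b ^+ 53) - (1%:R * b ^+ 54) - (1%:R * b ^+ 55) - (1%:R * b ^+ 56) - (1%:R * b ^+ 57) - (1%:R * b ^+ 59) - (1%:R * b ^+ 60))) hm h2 hb0); ring.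
- apply: (nz_of (k:=36) (Q:=(1%:R * 1 + (1%:R * b ^+ 2) + (1%:R * b ^+ 3) + (1%:R * b ^+ 4) + (1%:R * b ^+ 5) + (1%:R * b ^+ 6) + (1%:R * b ^+ 9) + (1%:R * b ^+ 11) + (1%:R * b ^+ 13) + (1%:R * b ^+ 17) + (1%:R * b ^+ 18) + (1%:R * b ^+ 21) + (1%:R * b ^+ 22) + (1%:R * b ^+ 23) + (1%:R * b ^+ 24) + (1%:R * b ^+ 26) + (1%:R * b ^+ 27) + (1%:R * b ^+ 28) + (1%:R * b ^+ 30) + (1%:R * b ^+ 32) + (1%:R * b ^+ 33) + (1%:R * b ^+ 35) + (1%:R * b ^+ 36) + (1%:R * b ^+ 40) + (1%:R * b ^+ 43) + (1%:R * b ^+ 48) + (1%:R * b ^+ 49) + (1%:R * b ^+ 50))) (R:=(- (1%:R * b ^+ 2) - (1%:R * b ^+ 3) - (1%:R * b ^+ 4) - (2%:R * b ^+ 5) - (2%:R * b ^+ 6) - (1%:R * b ^+ 7) - (2%:R * b ^+ 8) - (2%:R * b ^+ 9) - (1%:R * b ^+ 10) - (2%:R * b ^+ 11) - (1%:R * b ^+ 12) - (1%:R * b ^+ 13) - (1%:R * b ^+ 14) - (1%:R * b ^+ 15) - (1%:R * b ^+ 16) - (1%:R * b ^+ 17) - (1%:R * b ^+ 18) - (1%:R * b ^+ 19) - (1%:R * b ^+ 20) - (1%:R * b ^+ 21) - (1%:R * b ^+ 22) - (2%:R * b ^+ 23) - (2%:R * b ^+ 24) - (1%:R * b ^+ 25)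 - (2%:R * b ^+ 26) - (2%:R * b ^+ 27) - (2%:R * b ^+ 28) - (2%:R * b ^+ 29) - (2%:R * b ^+ 30) - (1%:R * b ^+ 31) - (2%:R * b ^+ 32) - (2%:R * b ^+ 33) - (1%:R * b ^+ 34) - (2%:R * b ^+ 35) - (2%:R * b ^+ 36) - (1%:R * b ^+ 37) - (2%:R * b ^+ 38) - (1%:R * b ^+ 39) - (1%:R * b ^+ 40) - (1%:R * b ^+ 41) - (1%:R * b ^+ 42) - (1%:R * b ^+ 43) - (1%:R * b ^+ 45) - (1%:R * b ^+ 46) - (1%:R * b ^+ 48) - (1%:R * b ^+ 49) - (1%:R * b ^+ 50) - (1%:R * b ^+ 51) - (1%:R * b ^+ 52) - (1%:R * b ^+ 53) - (1%:R * b ^+ 54) - (1%:R * b ^+ 55))) hm h2 hb0); ring.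
Qed.


Theorem lemma3p1 (f : nat) (F : finFieldType)
  (hf : (2 <= f)%N) (hF : #|F| = ((2 ^ f) ^ 2)%N) (b : F)
  (hb0 : b != 0) (hbtr : b + b ^+ (2 ^ f) = 1) (hbn : b ^+ (2 ^ f).+1 != 1) :
  exists a : F, a != 0 /\ (2 ^ f).+1.-primitive_root a /\ [/\
    (forall i, i \in index_set f -> (1 + b + b ^+ 2) ^+ (2 ^ i) != a + a^-1 + 1),
    (forall i, i \in index_set f -> (1 + b + b ^+ 2) ^+ (2 ^ i) !=
        a * (1 + b + b ^+ 3 + b ^+ 4) + a^-1 * (b ^+ 2 + b ^+ 3 + b ^+ 4)),
    a + a^-1 + 1 != a * (1 + b + b ^+ 3 + b ^+ 4) + a^-1 * (b ^+ 2 + b ^+ 3 + b ^+ 4)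
    & a + a^-1 + 1 != 0].
Proof.
have h2 : (2%:R : F) = 0.
  apply: pcharf0; apply: (@card_finPcharP F 2 (f * 2)) => //.
  by rewrite hF expnM.
have hbq : b ^+ (2 ^ f) = 1 - b.
  by apply/eqP; rewrite eq_sym subr_eq addrC hbtr.
have hc0 : 1 + b + b ^+ 2 != 0.
  apply/negP => /eqP c0.
  move: hbn; rewrite exprS hbq => /negP; apply; apply/eqP.
  apply: (char2_eq (K := b) h2).
  have -> : b * (1 - b) - 1 = 2%:R * b - (1 + b + b ^+ 2) by ring.
  by rewrite c0 subr0.
have hcq : (1 + b + b ^+ 2) ^+ (2 ^ f) = 1 + b + b ^+ 2.
  rewrite !(frob2 h2) expr1n exprAC hbq.
  by apply: (char2_eq (K := 1 - 2%:R * b) h2); ring.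
have hckf : forall k, (1 + b + b ^+ 2) ^+ (2 ^ (k * f)) = 1 + b + b ^+ 2.
  elim=> [|k IH]; first by rewrite mul0n expn0 expr1.
  by rewrite mulSn expnD exprM hcq IH.
have [f4|f3] := leqP 4 f.
  exact: (@general f F f4 hF b hb0 hc0 hckf).
have : f = 2%N \/ f = 3%N by lia.
case=> ef; subst f.
- exact: (@case2 F b hb0 h2 hbq hckf).
- exact: (@case3 F b hb0 h2 hbq hc0 hckf).
Qed.
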